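(* Let $G$ be a simple graph and let $s\geq 1$ be an integer such that $G$ contains no cycle of odd length at most $2s-3$. Then $I(G)^{(s+1)}\subseteq I(G)^s$.
   Context: $S=\mathbb{K}[x_1,\dots,x_n]$ over a field $\mathbb{K}$; vertices of $G$ are the variables. $I(G)$ is the edge ideal and $I(G)^{(s)}=\bigcap_{C\in\mathcal{C}(G)}\mathfrak{p}_C^s$, where $\mathcal{C}(G)$ is the set of minimal vertex covers of $G$ and $\mathfrak{p}_C$ is generated by the variables in $C$. For $s\le 2$ the hypothesis on odd cycles is vacuous. *)

(* Defs.v *)
From HB Require Import structures.
From mathcomp Require Import all_boot all_order all_algebra.
Set Implicit Arguments. Unset Strict Implicit. Unset Printing Implicit Defensive.
Import GRing.Theory.
Local Open Scope ring_scope.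

(* The polynomial ring K[x_0,...,x_{n-1}], built as iterated univariate
   polynomial rings: mpoly K 0 = K, mpoly K (n+1) = (mpoly K n)[X]. *)
Fixpoint mpoly (K : comNzRingType) (n : nat) : comNzRingType :=
  match n with
  | 0 => K
  | n'.+1 => ({poly mpoly K n'} : comNzRingType)
  end.

(* The variable x_i of mpoly K n (for i < n); x_{n-1} is the outermost 'X. *)
Fixpoint mvar (K : comNzRingType) (n : nat) (i : nat) : mpoly K n :=
  match n return mpoly K n with
  | 0 => 0
  | n'.+1 => if i == n' then ('X : {poly mpoly K n'})
             else ((mvar K n' i)%:P : {poly mpoly K n'})
  end.

Definition ideal_gen (R : comNzRingType) (A : R -> Prop) : R -> Prop :=
  fun f => exists s : seq (R * R),
      (forall p, p \in s -> A p.2) /\ f = \sum_(p <- s) p.1 * p.2.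

Definition ideal_mul (R : comNzRingType) (I J : R -> Prop) : R -> Prop :=
  ideal_gen (fun f => exists a b, I a /\ J b /\ f = a * b).

Definition unit_ideal (R : comNzRingType) : R -> Prop :=
  ideal_gen (fun f => f = 1).

Definition ideal_pow (R : comNzRingType) (I : R -> Prop) (s : nat) : R -> Prop :=
  iter s (ideal_mul I) (@unit_ideal R).

Definition ideal_cap (R : comNzRingType) (I J : R -> Prop) : R -> Prop :=
  fun f => I f /\ J f.

(* Simple graph on vertex set 'I_n: symmetric irreflexive relation e. *)

Definition edge_ideal (K : comNzRingType) (n : nat) (e : rel 'I_n)
  : mpoly K n -> Prop :=
  ideal_gen (fun f => exists i j : 'I_n, e i j /\ f = mvar K n i * mvar K n j).

Definition vertex_cover (n : nat) (e : rel 'I_n) (C : {set 'I_n}) : bool :=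
  [forall i, forall j, e i j ==> (i \in C) || (j \in C)].

Definition min_vertex_cover (n : nat) (e : rel 'I_n) (C : {set 'I_n}) : bool :=
  minset (vertex_cover e) C.

Definition prime_of_cover (K : comNzRingType) (n : nat) (C : {set 'I_n})
  : mpoly K n -> Prop :=
  ideal_gen (fun f => exists i : 'I_n, i \in C /\ f = mvar K n i).

Arguments prime_of_cover K {n} C _.
Arguments edge_ideal K {n} e _.
Arguments mvar K {n} i.

Definition symbolic_power (K : comNzRingType) (n : nat) (e : rel 'I_n) (s : nat)
  : mpoly K n -> Prop :=
  fun f => forall C : {set 'I_n}, min_vertex_cover e C ->
           ideal_pow (prime_of_cover K C) s f.

(* Main.v *)
Require Import Defs.
From HB Require Import structures.
From mathcomp Require Import all_boot all_order all_algebra.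
From mathcomp Require Import zify.
From Stdlib Require Import FunctionalExtensionality Classical.
Set Implicit Arguments. Unset Strict Implicit. Unset Printing Implicit Defensive.
Import GRing.Theory.

Definition upd (m : nat -> nat) (k j : nat) : nat -> nat :=
  fun i => if i == k then j else m i.

Section Alg.
Local Open Scope ring_scope.
Variable R : comNzRingType.

Fixpoint allmon (n : nat) : ((nat -> nat) -> Prop) -> mpoly R n -> Prop :=
  match n return ((nat -> nat) -> Prop) -> mpoly R n -> Prop with
  | 0 => fun Q f => f = 0 \/ Q (fun _ => 0%N)
  | n'.+1 => fun Q f => forall j, allmon (fun m => Q (upd m n' j)) ((f : {poly mpoly R n'})`_j)
  end.

Lemma allmon0 n Q : allmon (n := n) Q 0.
Proof. elim: n Q => [|n IH] Q /=; first by left. by move=> j; rewrite coef0. Qed.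

Lemma allmonD n Q (f g : mpoly R n) : allmon Q f -> allmon Q g -> allmon Q (f + g).
Proof.
elim: n Q f g => [|n IH] Q f g /=.
  by case=> [->|hq]; case=> [->|hq'];rewrite ?addr0; auto.
by move=> hf hg j; rewrite coefD; apply: IH.
Qed.

Lemma allmon_sum n Q I (r : seq I) (P : pred I) (F : I -> mpoly R n) :
  (forall i, P i -> allmon Q (F i)) -> allmon Q (\sum_(i <- r | P i) F i).
Proof.
move=> H; apply: (big_ind (allmon Q)) => //; first exact: allmon0.
exact: allmonD.
Qed.

Lemma allmonW n (Q Q' : (nat -> nat) -> Prop) (f : mpoly R n) :
  (forall m, Q m -> Q' m) -> allmon Q f -> allmon Q' f.
Proof.
elim: n Q Q' f => [|n IH] Q Q' f /= H; first by case; auto.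
by move=> hf j; apply: IH (hf j) => m; apply: H.
Qed.

Lemma allmonT n (f : mpoly R n) : allmon (fun _ => True) f.
Proof.
elim: n f => [|n IH] f /=; first by right.
by move=> j; apply: IH.
Qed.

Lemma upd_add m1 m2 k a b :
  upd (fun i => (m1 i + m2 i)%N) k (a + b) = (fun i => (upd m1 k a i + upd m2 k b i)%N).
Proof. by apply: functional_extensionality => i; rewrite /upd; case: ifP. Qed.

Lemma allmonM n (Q Q' S : (nat -> nat) -> Prop) (f g : mpoly R n) :
  (forall m1 m2, Q m1 -> Q' m2 -> S (fun i => (m1 i + m2 i)%N)) ->
  allmon Q f -> allmon Q' g -> allmon S (f * g).
Proof.
elim: n Q Q' S f g => [|n IH] Q Q' S f g /= H.
  case=> [->|hq]; first by rewrite mul0r; left.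
  case=> [->|hq']; first by rewrite mulr0; left.
  by right; have := H _ _ hq hq'.
move=> hf hg t; rewrite coefM; apply: allmon_sum => i _.
apply: IH (hf i) (hg (t - i)%N) => m1 m2 h1 h2.
have := H _ _ h1 h2; rewrite -upd_add subnKC //.
by rewrite -ltnS.
Qed.

Lemma allmon_and n (I : Type) (Q : I -> (nat -> nat) -> Prop) (f : mpoly R n) :
  (forall c, allmon (Q c) f) -> allmon (fun m => forall c, Q c m) f.
Proof.
elim: n Q f => [|n IH] Q f /=.
  move=> H; case: (eqVneq f 0) => [->|nz]; first by left.
  by right => c; case: (H c) => // h; rewrite h eqxx in nz.
by move=> H j; apply: IH => c; apply: H.
Qed.

Fixpoint mono (n : nat) (m : nat -> nat) : mpoly R n :=
  match n return mpoly R n with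
  | 0 => 1
  | n'.+1 => ((mono n' m)%:P * 'X^(m n') : {poly mpoly R n'})
  end.

Lemma mono_ext n m m' : (forall i, (i < n)%N -> m i = m' i) -> mono n m = mono n m'.
Proof.
elim: n => [|n IH] H //=.
by rewrite IH ?H // => i hi; apply: H; apply: ltnW.
Qed.

Lemma mono_add n m1 m2 : mono n (fun i => (m1 i + m2 i)%N) = mono n m1 * mono n m2.
Proof.
elim: n => [|n IH] /=; first by rewrite mulr1.
rewrite IH polyCM exprD.
rewrite -!mulrA; congr (_ * _); rewrite mulrC -!mulrA; congr (_ * _).
by rewrite mulrC.
Qed.

Definition ideal (n : nat) (J : mpoly R n -> Prop) :=
  [/\ J 0, forall f g, J f -> J g -> J (f + g) & forall f g, J f -> J (g * f)].

Lemma allmon_expand n (Q : (nat -> nat) -> Prop) (J : mpoly R n -> Prop) (f : mpoly R n) :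
  ideal J -> (forall m, Q m -> J (mono n m)) -> allmon Q f -> J f.
Proof.
elim: n Q J f => [|n IH] Q J f.
  case=> J0 JD JM HQ /= hf; case: hf => [->|hq] //.
  have -> : f = (f : R) * 1 by rewrite mulr1.
  exact: (JM _ f (HQ _ hq)).
case=> J0 JD JM HQ /= hf.
have fE : (f : {poly mpoly R n}) = \sum_(i < size (f : {poly mpoly R n})) (f : {poly mpoly R n})`_i *: 'X^i.
  by rewrite -[X in X = _]coefK poly_def.
rewrite fE.
apply: (big_ind J) => // i _.
pose J' := fun g : mpoly R n => J ((g%:P * 'X^i : {poly mpoly R n})).
have: J' ((f : {poly mpoly R n})`_i); last by rewrite /J' mul_polyC.
apply: (IH (fun m => Q (upd m n i))) (hf i).
  split; rewrite /J'.
  - by rewrite mul0r.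
  - by move=> g h hg hh; rewrite polyCD mulrDl; apply: JD.
  - by move=> g h hg; rewrite polyCM -mulrA; apply: JM.
move=> m hm; rewrite /J'.
have := HQ _ hm => /=.
congr J; congr (_ * _); last by rewrite /upd eqxx.
congr (_%:P); apply: mono_ext => k hk; rewrite /upd.
by rewrite ifN // neq_ltn hk.
Qed.

End Alg.

Section Alg2.
Local Open Scope ring_scope.
Variable R : comNzRingType.

Lemma allmon_gen n (A : mpoly R n -> Prop) Q f :
  (forall m1 m2, Q m2 -> Q (fun i => (m1 i + m2 i)%N)) ->
  (forall g, A g -> allmon Q g) -> ideal_gen A f -> allmon Q f.
Proof.
move=> HQ HA [s [Hs ->]].
rewrite big_seq_cond; apply: allmon_sum => p /andP[ps _].
apply: (allmonM (Q := fun _ => True)) (allmonT _) (HA _ (Hs _ ps)).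
by move=> m1 m2 _ h; exact: HQ.
Qed.

Definition wt n (C : {set 'I_n}) (m : nat -> nat) := (\sum_(i in C) m i)%N.

Lemma wt_add n (C : {set 'I_n}) m1 m2 :
  wt C (fun i => (m1 i + m2 i)%N) = (wt C m1 + wt C m2)%N.
Proof. by rewrite /wt big_split. Qed.

Lemma allmon_mvar n (i : nat) : (i < n)%N -> allmon (fun m => (1 <= m i)%N) (mvar R (n := n) i).
Proof.
elim: n => [//|n IH] hi /= j.
case: eqP => [->|ne].
  rewrite coefX; case: eqP => [->|_]; last exact: allmon0.
  by apply: allmonW (allmonT _) => m _; rewrite /upd eqxx.
rewrite coefC; case: eqP => [->|_]; last exact: allmon0.
have hi' : (i < n)%N by rewrite ltnS leq_eqVlt in hi; case/orP: hi => // /eqP.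
apply: allmonW (IH hi') => m; rewrite /upd; case: eqP => // /eqP; by [].
Qed.

Lemma allmon_pow n (C : {set 'I_n}) k f :
  ideal_pow (prime_of_cover R C) k f -> allmon (fun m => (k <= wt C m)%N) f.
Proof.
have Hup : forall k0, forall m1 m2 : nat -> nat, (k0 <= wt C m2)%N ->
      (k0 <= wt C (fun i => (m1 i + m2 i)%N))%N.
  by move=> k0 m1 m2 h; rewrite wt_add; apply: leq_trans h (leq_addl _ _).
elim: k f => [|k IH] f /=.
  by move=> _; apply: allmonW (allmonT _) => m.
apply: allmon_gen; first exact: Hup.
move=> g [a [b [ha [hb ->]]]].
apply: (allmonM (Q := fun m => (1 <= wt C m)%N) (Q' := fun m => (k <= wt C m)%N)).
- by move=> m1 m2 h1 h2; rewrite wt_add -add1n leq_add.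
- apply: allmon_gen ha; first exact: Hup.
  move=> x [i [iC ->]]; apply: allmonW (allmon_mvar (ltn_ord i)) => m hm.
  by rewrite /wt (bigD1 i) //= (leq_trans hm) // leq_addr.
- exact: IH.
Qed.


Lemma gen_ideal n (A : mpoly R n -> Prop) : ideal (ideal_gen A).
Proof.
split.
- by exists [::]; split => //; rewrite big_nil.
- move=> f g [s1 [H1 ->]] [s2 [H2 ->]]; exists (s1 ++ s2); split; last by rewrite big_cat.
  by move=> p; rewrite mem_cat => /orP[]; [apply: H1 | apply: H2].
- move=> f g [s1 [H1 ->]]; exists [seq (g * p.1, p.2) | p <- s1]; split.
    by move=> p /mapP[q qs ->] /=; apply: H1.
  by rewrite big_map mulr_sumr; apply: eq_bigr => p _; rewrite mulrA.
Qed.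

Lemma gen_mem n (A : mpoly R n -> Prop) x : A x -> ideal_gen A x.
Proof.
by move=> h; exists [:: (1, x)]; split; [move=> p; rewrite inE => /eqP -> | rewrite big_seq1 mul1r].
Qed.

Lemma pow_ideal n (I : mpoly R n -> Prop) k : ideal (ideal_pow I k).
Proof. by case: k => [|k]; apply: gen_ideal. Qed.

Lemma mono0 n : mono R n (fun _ => 0%N) = 1.
Proof. by elim: n => [|n IH] //=; rewrite IH expr0 mulr1. Qed.

Lemma mono_ind n j : (j < n)%N -> mono R n (fun i => nat_of_bool (i == j)) = mvar R (n := n) j.
Proof.
elim: n => [//|n IH] hj /=.
case: (eqVneq j n) => [->|ne].
  rewrite (@mono_ext R n _ (fun _ => 0%N)) ?mono0.
    by rewrite polyC1 mul1r; change ('X^1 = ('X : {poly mpoly R n})); rewrite expr1.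
  by move=> i hi; rewrite (ltn_eqF hi).
change (((mono R n (fun i : nat => i == j))%:P * 'X^0 : {poly mpoly R n}) = (mvar R j)%:P).
rewrite expr0 mulr1 IH //.
by rewrite ltnS leq_eqVlt (negbTE ne) in hj.
Qed.

Definition load n (L : seq ('I_n * 'I_n)) : nat -> nat :=
  fun i => (\sum_(p <- L) (nat_of_bool (nat_of_ord p.1 == i) + nat_of_bool (nat_of_ord p.2 == i)))%N.

Lemma edges_pow n (e : rel 'I_n) (L : seq ('I_n * 'I_n)) :
  all (fun p => e p.1 p.2) L ->
  ideal_pow (edge_ideal R e) (size L) (mono R n (load L)).
Proof.
elim: L => [|p L IH] /=.
  move=> _; rewrite (_ : load [::] = fun _ => 0%N) ?mono0.
    by apply: gen_mem.
  by apply: functional_extensionality => i; rewrite /load big_nil.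
case/andP=> hp hL.
have -> : load (p :: L) = (fun i => (nat_of_bool (nat_of_ord p.1 == i) + nat_of_bool (nat_of_ord p.2 == i)) + load L i)%N.
  by apply: functional_extensionality => i; rewrite /load big_cons.
rewrite mono_add.
apply: gen_mem; do 2 eexists; split; last split; [|exact: (IH hL)|reflexivity].
apply: gen_mem; exists p.1, p.2; split => //.
rewrite mono_add.
rewrite (@mono_ext R n _ (fun i => nat_of_bool (i == p.1))); last by move=> i _; rewrite eq_sym.
rewrite (@mono_ext R n (fun i => nat_of_bool (nat_of_ord p.2 == i)) (fun i => nat_of_bool (i == p.2))); last by move=> i _; rewrite eq_sym.
by rewrite !mono_ind.
Qed.

Lemma mono_pow n (e : rel 'I_n) (L : seq ('I_n * 'I_n)) (m : nat -> nat) :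
  all (fun p => e p.1 p.2) L -> (forall i, (i < n)%N -> (load L i <= m i)%N) ->
  ideal_pow (edge_ideal R e) (size L) (mono R n m).
Proof.
move=> hL hm.
rewrite (@mono_ext R n m (fun i => (load L i + (m i - load L i))%N)); last first.
  by move=> i hi; rewrite subnKC // hm.
rewrite mono_add mulrC.
by case: (pow_ideal (edge_ideal R e) (size L)) => _ _ JM; apply: JM; exact: edges_pow.
Qed.

End Alg2.

Section Comb.
Variable n : nat.
Variable e : rel 'I_n.
Hypothesis e_sym : symmetric e.
Hypothesis e_irr : irreflexive e.

Definition wa (a : 'I_n -> nat) (C : {set 'I_n}) := \sum_(i in C) a i.

Lemma waE a C : wa a C = \sum_i ((i \in C) * a i).
Proof. by rewrite /wa big_mkcond; apply: eq_bigr => i _; case: (i \in C); rewrite ?mul1n. Qed.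

Lemma wa_mod a P Q : wa a (P :&: Q) + wa a (P :|: Q) = wa a P + wa a Q.
Proof.
rewrite !waE -!big_split; apply: eq_bigr => i _ /=; rewrite !inE.
by case: (i \in P); case: (i \in Q) => /=; rewrite ?mul0n ?mul1n ?addn0.
Qed.

Lemma wa_split a P (X : {set 'I_n}) : wa a P = wa a (P :&: X) + wa a (P :\: X).
Proof.
rewrite !waE -!big_split; apply: eq_bigr => i _ /=; rewrite !inE.
by case: (i \in P); case: (i \in X) => /=; rewrite ?mul0n ?mul1n ?addn0.
Qed.

Lemma wa_sub a (P Q : {set 'I_n}) : P \subset Q -> wa a P <= wa a Q.
Proof.
move=> /subsetP sPQ; rewrite !waE; apply: leq_sum => i _.
by case: (boolP (i \in P)) => // /sPQ ->.
Qed.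

Lemma wa_zero a (P : {set 'I_n}) : {in P, forall i, a i = 0} -> wa a P = 0.
Proof. by move=> h; rewrite /wa big1 // => i /h. Qed.

Lemma wa_U0 a (P Z : {set 'I_n}) : {in Z, forall i, a i = 0} -> wa a (P :|: Z) = wa a P.
Proof.
move=> h; apply/eqP; rewrite eqn_leq (wa_sub a (subsetUl P Z)) andbT.
rewrite !waE; apply: leq_sum => i _; rewrite !inE.
by case: (boolP (i \in Z)) => [/h ->|]; rewrite ?muln0 ?orbF.
Qed.

Lemma wa_D1 a (P : {set 'I_n}) u : u \in P -> wa a P = a u + wa a (P :\ u).
Proof. by move=> uP; rewrite /wa (bigD1 u) //=; congr (_ + _); apply: eq_bigl => i; rewrite !inE andbC. Qed.

Lemma coverP (C : {set 'I_n}) : reflect (forall i j, e i j -> (i \in C) || (j \in C)) (vertex_cover e C).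
Proof.
apply: (iffP forallP) => [h i j eij | h i].
  by have /forallP /(_ j) := h i; rewrite eij.
by apply/forallP => j; apply/implyP; apply: h.
Qed.

Lemma BL0 (a : 'I_n -> nat) (col : 'I_n -> bool)
  (hcol : forall x y, e x y -> 0 < a x -> 0 < a y -> col x != col y)
  (t : nat) (hmin : forall C, vertex_cover e C -> t <= wa a C)
  (Z := [set i | a i == 0])
  (w : 'I_n) (Cw : {set 'I_n}) (hCw : vertex_cover e Cw) (hCwt : wa a Cw = t)
  (hZ : Z \subset Cw) (hwC : w \in Cw) (hwa : 0 < a w) (hwc : col w = false) :
  exists v, [/\ e w v, 0 < a v & forall C, vertex_cover e C -> w \in C -> v \in C -> t < wa a C].
Proof.
pose X := [set i | ~~ col i].
pose fam := fun C : {set 'I_n} => [&& vertex_cover e C, wa a C == t, Z \subset C & w \in C].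
have exk : exists k, [exists C, fam C && (wa a (C :&: X) == k)].
  exists (wa a (Cw :&: X)); apply/existsP; exists Cw; rewrite /fam /=. by rewrite hCw hCwt hZ hwC !eqxx.
case: (ex_minnP exk) => k /existsP [T /andP[hfam /eqP hTk]] kmin.
move: hfam; rewrite /fam /= => /and4P[hT /eqP hTt hZT hwT].
have Z0 : {in Z, forall i, a i = 0} by move=> i; rewrite inE => /eqP.
have [v /andP[ewv vT]] : exists v, e w v && (v \notin T).
  case: (boolP [exists v, e w v && (v \notin T)]) => [/existsP //|/existsPn hno]; exfalso.
  have cov : vertex_cover e (T :\ w).
    apply/coverP => i j eij; rewrite !inE.
    have /coverP /(_ i j eij) := hT.
    move=> hij.
    case: (eqVneq i w) => [iw|iw]; case: (eqVneq j w) => [jw|jw] /=.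
    - by move: eij; rewrite iw jw e_irr.
    - by move: (hno j); rewrite -iw eij /= negbK => ->.
    - by move: (hno i); rewrite -jw e_sym eij /= negbK => ->.
    - by [].
  have := hmin _ cov; rewrite -hTt (wa_D1 a hwT).
  move=> h; have h2 : a w + wa a (T :\ w) <= 0 + wa a (T :\ w) by exact: h.
  by move: h2; rewrite leq_add2r leqNgt hwa.
have av : 0 < a v.
  by rewrite lt0n; apply: contra vT => h; apply: (subsetP hZT); rewrite inE.
have colv : col v = true by move: (hcol _ _ ewv hwa av); rewrite hwc; case: (col v).
exists v; split => // C hC wC vC.
rewrite ltnNge; apply/negP => Ct.
pose C' := C :|: Z.
have hC' : vertex_cover e C'.
  by apply/coverP => i j eij; have /coverP /(_ i j eij) := hC; rewrite !inE; case/orP => ->; rewrite ?orbT.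
have C't : wa a C' <= t by rewrite /C' wa_U0.
have ZC' : Z \subset C' by apply: subsetUr.
have wC' : w \in C' by rewrite !inE wC.
have vC' : v \in C' by rewrite !inE vC.
clearbody C'.
pose M := (C' :&: T :&: X) :|: ((C' :|: T) :\: X).
pose J := ((C' :|: T) :&: X) :|: ((C' :&: T) :\: X).
have MJ : wa a M + wa a J = wa a C' + wa a T.
  rewrite !waE -!big_split; apply: eq_bigr => i _ /=; rewrite !inE.
  by case: (i \in C'); case: (i \in T); case: (col i) => //=; rewrite ?mul1n ?mul0n ?addn0 ?add0n.
have covgen : forall i j, e i j -> [|| i \in C' | j \in C'] -> [|| i \in T | j \in T] ->
     (i \in C') && (i \in T) || (j \in C') && (j \in T) || (col i != col j).
  move=> i j eij h1 h2.
  case: (boolP (0 < a i)) => ai; last first.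
    have iZ : i \in Z by rewrite inE; move: ai; rewrite lt0n negbK.
    by rewrite (subsetP ZC' _ iZ) (subsetP hZT _ iZ).
  case: (boolP (0 < a j)) => aj; last first.
    have jZ : j \in Z by rewrite inE; move: aj; rewrite lt0n negbK.
    by rewrite (subsetP ZC' _ jZ) (subsetP hZT _ jZ) orbT.
  by rewrite hcol ?orbT.
have hM : vertex_cover e M.
  apply/coverP => i j eij.
  have := covgen i j eij (elimT (coverP C') hC' i j eij) (elimT (coverP T) hT i j eij).
  move: (elimT (coverP C') hC' i j eij) (elimT (coverP T) hT i j eij).
  rewrite !inE.
  by case: (i \in C'); case: (i \in T); case: (j \in C'); case: (j \in T); case: (col i); case: (col j).
have hJ : vertex_cover e J.
  apply/coverP => i j eij.
  have := covgen i j eij (elimT (coverP C') hC' i j eij) (elimT (coverP T) hT i j eij).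
  move: (elimT (coverP C') hC' i j eij) (elimT (coverP T) hT i j eij).
  rewrite !inE.
  by case: (i \in C'); case: (i \in T); case: (j \in C'); case: (j \in T); case: (col i); case: (col j).
have Mt : wa a M = t.
  apply/eqP; rewrite eqn_leq (hmin _ hM) andbT -(leq_add2r (wa a J)) MJ hTt.
  exact: leq_add C't (hmin _ hJ).
have famM : fam M.
  rewrite /fam hM Mt eqxx /=; apply/andP; split.
    apply/subsetP => i iZ; rewrite !inE (subsetP ZC' _ iZ) (subsetP hZT _ iZ) /=.
    by case: (col i).
  by rewrite !inE wC' hwT hwc.
have kM : k <= wa a (M :&: X) by apply: kmin; apply/existsP; exists M; rewrite famM eqxx.
have Tsplit := wa_split a T X.
have Msplit := wa_split a M X.
have vsub : ((T :\: X) :|: [set v]) \subset (M :\: X).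
  apply/subsetP => i; rewrite !inE => /orP[/andP[iX iT]|/eqP ->].
    by rewrite iX iT !orbT.
  by rewrite colv vC' /= orbT.
have := wa_sub a vsub.
rewrite (wa_D1 a (_ : v \in (T :\: X) :|: [set v])); last by rewrite !inE eqxx orbT.
rewrite (_ : ((T :\: X) :|: [set v]) :\ v = T :\: X); last first.
  apply/setP => i; rewrite !inE; case: (eqVneq i v) => [->|iv] /=.
    by rewrite (negbTE vT) andbF.
  by rewrite orbF.
move=> h.
have : t + a v <= t.
  rewrite -{1}hTt Tsplit hTk -addnA [wa a (T :\: X) + a v]addnC -Mt Msplit.
  by apply: leq_add; [exact: kM | exact: h].
by rewrite -{2}[t]addn0 leq_add2l leqNgt av.
Qed.


Lemma BL (a : 'I_n -> nat) (col : 'I_n -> bool)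
  (hcol : forall x y, e x y -> 0 < a x -> 0 < a y -> col x != col y)
  (t : nat) (hmin : forall C, vertex_cover e C -> t <= wa a C)
  (Cm : {set 'I_n}) (hCm : vertex_cover e Cm) (hCmt : wa a Cm = t) (ht : 0 < t) :
  exists u v, [/\ e u v, 0 < a u, 0 < a v & forall C, vertex_cover e C -> u \in C -> v \in C -> t < wa a C].
Proof.
pose Z := [set i | a i == 0].
have Z0 : {in Z, forall i, a i = 0} by move=> i; rewrite inE => /eqP.
pose Cw := Cm :|: Z.
have hCw : vertex_cover e Cw.
  by apply/coverP => i j eij; have /coverP /(_ i j eij) := hCm; rewrite !inE; case/orP => ->; rewrite ?orbT.
have hCwt : wa a Cw = t by rewrite /Cw wa_U0.
have [w /andP[wC wa0]] : exists w, (w \in Cw) && (0 < a w).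
  case: (boolP [exists w, (w \in Cw) && (0 < a w)]) => [/existsP //|/existsPn hno].
  exfalso; suff : wa a Cw = 0 by rewrite hCwt => t0; rewrite t0 in ht.
  by apply: wa_zero => i iC; have := hno i; rewrite iC /= lt0n negbK => /eqP.
have hZ : Z \subset Cw by apply: subsetUr.
case cw: (col w).
  have hcol' : forall x y, e x y -> 0 < a x -> 0 < a y -> ~~ col x != ~~ col y.
    by move=> x y exy ax ay; rewrite (inj_eq negb_inj) hcol.
  have [v [ewv av H]] := @BL0 a (fun x => ~~ col x) hcol' t hmin w Cw hCw hCwt hZ wC wa0 (congr1 negb cw).
  by exists w, v.
have [v [ewv av H]] := @BL0 a col hcol t hmin w Cw hCw hCwt hZ wC wa0 cw.
by exists w, v.
Qed.

Lemma sum_ind (C : {set 'I_n}) u : \sum_i ((i \in C) * (i == u)) = (u \in C).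
Proof.
rewrite (bigD1 u) //= eqxx muln1 big1 ?addn0 // => i /negbTE ->; by rewrite muln0.
Qed.

Lemma wa_minus a u v (C : {set 'I_n}) : 0 < a u -> 0 < a v -> u != v ->
  wa a C = wa (fun i => a i - (i == u) - (i == v)) C + (u \in C) + (v \in C).
Proof.
move=> au av uv; rewrite !waE -sum_ind -(sum_ind C v) -!big_split; apply: eq_bigr => i _ /=.
case: (eqVneq i u) => [->|iu]; first by rewrite (negbTE uv) /= subn0 -!mulnDr addn0 subnK.
case: (eqVneq i v) => [->|iv] /=; first by rewrite subn0 -!mulnDr addn0 subnK.
by rewrite !subn0 !muln0 !addn0.
Qed.

End Comb.

Section Walk.
Variable T : finType.
Variable E : rel T.

Lemma split_nonuniq (p : seq T) : ~~ uniq p -> exists p1 p2 p3 y, p = p1 ++ y :: p2 ++ y :: p3.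
Proof.
elim: p => [//|z q IH] /=; rewrite negb_and negbK => /orP[zq|nq].
  by case/splitPr: zq => q1 q2; exists [::], q1, q2, z.
by case: (IH nq) => p1 [p2 [p3 [y ->]]]; exists (z :: p1), p2, p3, y.
Qed.

Lemma walk_cycle L : forall x p, size p = L -> path E x p -> last x p = x -> odd L ->
  exists c, ucycle E c /\ odd (size c).
Proof.
elim/ltn_ind: L => L IH x p hs hp hl ho.
case: (boolP (uniq p)) => up.
  case/lastP: p hs hp hl up => [|q z] hs hp hl up; first by rewrite -hs in ho.
  rewrite last_rcons in hl; rewrite hl in hp up.
  exists (x :: q); split; last by rewrite /= -hs size_rcons in ho *.
  by rewrite /ucycle /= hp; rewrite rcons_uniq in up.
case: (split_nonuniq up) => p1 [p2 [p3 [y ep]]]; subst p.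
move: hp; rewrite cat_path /= cat_path /= => /and5P[hp1 ey1 hp2 hy2 hp3].
rewrite last_cat /= last_cat /= in hl.
have w1 : path E y (rcons p2 y) by rewrite rcons_path hp2 hy2.
have w2 : path E y (p3 ++ rcons p1 y) by rewrite cat_path hp3 hl rcons_path hp1 ey1.
rewrite !size_cat /= size_cat /= in hs.
have : odd (size p2).+1 || odd (size p3 + size p1).+1.
  have key : (size p2).+1 + (size p3 + size p1).+1 = L by lia.
  by move: ho; rewrite -key oddD; case: (odd (size p2).+1); case: (odd (size p3 + size p1).+1).
case/orP => hodd.
  apply: (IH (size p2).+1 _ y (rcons p2 y)) => //; first lia.
    by rewrite size_rcons.
  by rewrite last_rcons.
apply: (IH (size p3 + size p1).+1 _ y (p3 ++ rcons p1 y)) => //; first lia.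
  by rewrite size_cat size_rcons addnS.
by rewrite last_cat last_rcons.
Qed.

Definition E2 : rel (T * bool) := fun x y => E x.1 y.1 && (y.2 == ~~ x.2).

Lemma path2 x p : path E2 x p -> path E x.1 (map fst p) /\ (last x p).2 = x.2 (+) odd (size p).
Proof.
elim: p x => [|z p IH] x /=; first by rewrite addbF.
case/andP => /andP[exz /eqP hz] hp; have [h1 h2] := IH z hp.
split; first by rewrite exz.
by rewrite h2 hz; case: (x.2); case: odd.
Qed.

Lemma conn_odd y b : connect E2 (y, b) (y, ~~ b) -> exists c, ucycle E c /\ odd (size c).
Proof.
case/connectP => p hp hl.
have [h1 h2] := path2 hp.
rewrite -hl /= in h2.
have ho : odd (size p) by clear -h2; move: h2; case: b; case: odd.
apply: (@walk_cycle (size p) y (map fst p)) => //; first by rewrite size_map.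
  by rewrite (last_map fst p (y, b)) -hl.
Qed.

End Walk.

Section Dich.
Variable n : nat.
Variable e : rel 'I_n.
Hypothesis e_sym : symmetric e.
Hypothesis e_irr : irreflexive e.

Lemma path_all (E : rel 'I_n) (p : pred 'I_n) x s :
  (forall u v, E u v -> p v) -> path E x s -> all p s.
Proof.
move=> H; elim: s x => [//|z s IH] x /= /andP[hxz hs].
by rewrite (H _ _ hxz) (IH z hs).
Qed.

Lemma dich (p : pred 'I_n) : (forall c, ucycle e c -> all p c -> ~~ odd (size c)) ->
  exists col : 'I_n -> bool, forall x y, e x y -> p x -> p y -> col x != col y.
Proof.
move=> H.
pose E := fun x y => [&& e x y, p x & p y].
have Esym : symmetric E by move=> x y; rewrite /E e_sym; case: (p x); case: (p y).
have noodd : forall y b, ~ connect (E2 E) (y, b) (y, ~~ b).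
  move=> y b /conn_odd [c [hc hoc]].
  have hce : ucycle e c.
    move: hc; rewrite /ucycle => /andP[hc ->]; rewrite andbT.
    by apply: sub_cycle hc => u v /and3P[].
  have hpc : all p c.
    case: c hc hoc hce => [//|x q] /andP[hc _] _ _.
    have := path_all (p := p) (fun u v (h : E u v) => let: And3 _ _ pv := and3P h in pv) hc.
    by rewrite all_rcons.
  by have := H c hce hpc; rewrite hoc.
have E2sym : connect_sym (E2 E).
  apply: sym_connect_sym => [[x b] [y c]]; rewrite /E2 /= Esym.
  by case: b; case: c.
have Econ : connect_sym E by apply: sym_connect_sym.
have reach : forall r q b0, path E r q -> exists b, connect (E2 E) (r, b0) (last r q, b).
  move=> r q; elim: q r => [|z q IH] r b0 /=; first by exists b0; apply: connect0.
  case/andP => erz hq; case: (IH z (~~ b0) hq) => b hb; exists b.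
  apply: connect_trans hb; apply: connect1; by rewrite /E2 /= erz eqxx.
pose col := fun x => connect (E2 E) (fingraph.root E x, false) (x, false).
exists col => x y exy px py.
have Exy : E x y by rewrite /E exy px py.
have rxy : fingraph.root E x = fingraph.root E y by apply/(fingraph.rootP Econ); apply: connect1.
have rx : connect E (fingraph.root E x) x by rewrite Econ connect_root.
apply/negP => /eqP hc; rewrite /col -rxy in hc.
have rb : forall z, connect E (fingraph.root E x) z -> exists b, connect (E2 E) (fingraph.root E x, false) (z, b).
  by move=> z /connectP [q hq ->]; apply: reach.
case cx: (connect (E2 E) (fingraph.root E x, false) (x, false)).
  rewrite cx in hc.
  have h1 : connect (E2 E) (y,true) (x,false) by apply: connect1; rewrite /E2 /= Esym Exy.
  have h2 : connect (E2 E) (x,false) (fingraph.root E x,false) by rewrite E2sym cx.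
  have h3 : connect (E2 E) (fingraph.root E x,false) (y,false) by rewrite -hc.
  by apply: (noodd y true); exact: connect_trans h1 (connect_trans h2 h3).
rewrite cx in hc.
case: (rb x rx) => [[] hb]; last by rewrite hb in cx.
have ry : connect E (fingraph.root E x) y by rewrite rxy Econ connect_root.
case: (rb y ry) => [[] hb']; last by rewrite -hc in hb'.
have : connect (E2 E) (fingraph.root E x, false) (y, false).
  apply: connect_trans hb _; apply: connect1; by rewrite /E2 /= Exy.
by rewrite -hc.
Qed.
End Dich.

Section Cyc.
Variable n : nat.
Variable e : rel 'I_n.
Hypothesis e_sym : symmetric e.
Hypothesis e_irr : irreflexive e.

Definition loadv (L : seq ('I_n * 'I_n)) (v : 'I_n) : nat :=
  \sum_(p <- L) ((p.1 == v) + (p.2 == v)).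

Fixpoint pm (l : seq 'I_n) : seq ('I_n * 'I_n) :=
  if l is x :: l' then (if l' is y :: r then (x, y) :: pm r else [::]) else [::].

Lemma pm_prop k : forall l, size l <= k ->
  [/\ size (pm l) = (size l)./2, sorted e l -> all (fun p => e p.1 p.2) (pm l)
    & forall v, loadv (pm l) v <= count_mem v l].
Proof.
elim: k => [|k IH] [|x [|y r]] //= hs; try by split => // v; rewrite /loadv big_nil.
have [h1 h2 h3] := IH r (ltnW hs : size r <= k) ; split.
- by rewrite h1.
- by case/andP=> exy /path_sorted/h2 ->; rewrite exy.
- move=> v; rewrite /loadv big_cons /=; have := h3 v; rewrite /loadv; move=> h; rewrite -addnA !leq_add2l; exact: h.
Qed.

Lemma pm_size l : size (pm l) = (size l)./2.
Proof. by case: (pm_prop (leqnn (size l))). Qed.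
Lemma pm_edges l : sorted e l -> all (fun p => e p.1 p.2) (pm l).
Proof. by case: (pm_prop (leqnn (size l))). Qed.
Lemma pm_load l v : loadv (pm l) v <= count_mem v l.
Proof. by case: (pm_prop (leqnn (size l))). Qed.

Lemma ucycle_sorted z l : ucycle e (z :: l) -> sorted e l /\ uniq l.
Proof.
rewrite /ucycle /= rcons_path => /andP[/andP[hp _] /andP[_ ul]].
by split => //; apply: path_sorted hp.
Qed.

Lemma gen s (a : 'I_n -> nat) z l x y : ucycle e (z :: l) -> size l = (2 * s) -> e x y ->
  (forall v, (x == v) + (y == v) + (v \in l) <= a v) ->
  exists L : seq ('I_n * 'I_n), size L = s.+1 /\ all (fun p => e p.1 p.2) L /\ forall v, loadv L v <= a v.
Proof.
move=> hc hs exy hl; have [so ul] := ucycle_sorted hc.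
exists ((x, y) :: pm l); split; first by rewrite /= pm_size hs mul2n doubleK.
split; first by rewrite /= exy pm_edges.
move=> v; rewrite /loadv big_cons /=; have := pm_load l v; rewrite /loadv count_uniq_mem //.
have := hl v; lia.
Qed.


Lemma cycle_sorted (c : seq 'I_n) : cycle e c -> sorted e c.
Proof. by case: c => [//|h r] /=; rewrite rcons_path => /andP[]. Qed.

Lemma ucycle_size1 (c : seq 'I_n) : ucycle e c -> size c != 1.
Proof. by case: c => [//|x [|y r]] //=; rewrite /ucycle /= e_irr. Qed.

Lemma chord s (c : seq 'I_n)
  (hodd : forall c : seq 'I_n, ucycle e c -> 3 <= size c -> odd (size c) -> ~~ (size c <= 2 * s.+1 - 3))
  (sc : sorted e c) (uc : uniq c) (Ls : size c = 2 * s + 1) :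
  forall i j, e i j -> i \in c -> j \in c -> odd (index i c) -> odd (index j c) ->
    index i c < index j c -> False.
Proof.
move=> i j eij ic jc oi oj lt.
have x0 := i.
have oddE : forall k, odd k -> k = (2 * k./2).+1.
  by move=> k ok; rewrite -[k in k = _]odd_double_half ok mul2n.
set ii := index i c in oi lt *; set jj := index j c in oj lt *.
have jjs : jj < size c by rewrite index_mem.
pose c2 := drop ii (take jj.+1 c).
have sz : size c2 = jj.+1 - ii by rewrite size_drop size_takel.
have uc2 : uniq c2 by rewrite drop_uniq ?take_uniq.
have sc2 : sorted e c2 by apply: drop_sorted; apply: take_sorted.
have ec2 : c2 = i :: drop ii.+1 (take jj.+1 c).
  rewrite /c2 (drop_nth x0); last by rewrite size_takel //; lia.
  by rewrite nth_take ?nth_index //; lia.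
have lc2 : last i (drop ii.+1 (take jj.+1 c)) = j.
  have -> : last i (drop ii.+1 (take jj.+1 c)) = last x0 c2 by rewrite ec2.
  rewrite -nth_last sz /c2 nth_drop nth_take; last by lia.
  by rewrite (_ : ii + (jj.+1 - ii).-1 = jj) ?nth_index //; lia.
have hc2 : ucycle e c2.
  rewrite /ucycle uc2 andbT ec2 /= rcons_path lc2 e_sym eij andbT.
  by move: sc2; rewrite ec2.
have eii := oddE _ oi; have ejj := oddE _ oj.
have s3 : 3 <= size c2 by rewrite sz; lia.
have so : odd (size c2).
  rewrite sz (_ : jj.+1 - ii = (2 * (jj./2 - ii./2)).+1); last by lia.
  by rewrite /= oddM.
have := hodd c2 hc2 s3 so; rewrite sz; lia.
Qed.

Lemma cycle_case s (a : 'I_n -> nat)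
  (hodd : forall c : seq 'I_n, ucycle e c -> 3 <= size c -> odd (size c) -> ~~ (size c <= 2 * s.+1 - 3))
  (hcov : forall C, vertex_cover e C -> s.+1 < wa a C)
  (c : seq 'I_n) (hc : ucycle e c) (hca : all (fun x => 0 < a x) c) (hco : odd (size c)) :
  exists L : seq ('I_n * 'I_n), size L = s.+1 /\ all (fun p => e p.1 p.2) L /\ forall v, loadv L v <= a v.
Proof.
have hpos : forall v, v \in c -> 0 < a v by move=> v vc; exact: (allP hca v vc).
have uc : uniq c by case/andP: hc.
have sc : sorted e c by apply: cycle_sorted; case/andP: hc.
have c3 : 3 <= size c.
  have h1 := ucycle_size1 hc.
  have h0 : size c != 0 by apply: contraTneq hco => ->.
  have h2 : size c != 2 by apply: contraTneq hco => ->.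
  move: h0 h1 h2 => /eqP h0 /eqP h1 /eqP h2; lia.
have Lge : 2 * s + 1 <= size c.
  have := hodd c hc c3 hco; rewrite -ltnNge => h.
  have : size c != 2 * s by apply: contraTneq hco => ->; rewrite oddM.
  move=> /eqP ne; lia.
case: (ltnP (2 * s + 2) (size c)) => hlong.
  exists (pm (take (2 * s + 2) c)); split.
    rewrite pm_size size_takel ?(ltnW hlong) //.
    have -> : 2 * s + 2 = (s.+1).*2 by rewrite -mul2n; lia.
    exact: doubleK.
  split; first by apply: pm_edges; apply: take_sorted.
  move=> v; apply: leq_trans (pm_load _ v) _; rewrite count_uniq_mem ?take_uniq //.
  by case vt: (v \in take _ c) => //; apply: hpos; apply: mem_take vt.
have Ls : size c = 2 * s + 1.
  have : size c != 2 * s + 2 by apply: contraTneq hco => ->; rewrite addn2 /= oddM.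
  move=> /eqP; lia.
case: (boolP (has (fun v => 1 < a v) c)) => [/hasP [v vc av]|noheavy].
  case: (rot_to vc) => i s' hr.
  have hc' : ucycle e (v :: s') by rewrite -hr rot_ucycle.
  have hs' : size s' = 2 * s by have := size_rot i c; rewrite hr /= Ls; lia.
  have mem' : forall w, w \in v :: s' -> w \in c by move=> w; rewrite -hr mem_rot.
  move: hc' hs' mem'; case/lastP: s' {hr} => [|l1 z] hc' hs' mem'.
    by move: hs'; rewrite /= => hs0; move: c3; rewrite Ls -hs0.
  have hc2 : ucycle e (z :: v :: l1).
    have -> : z :: v :: l1 = rot (size l1).+1 (v :: rcons l1 z).
      by rewrite /rot /= -cats1 drop_size_cat // take_size_cat.
    by rewrite rot_ucycle.
  have ezv : e z v by move: hc2 => /andP[/= /andP[]].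
  have u2 : uniq (z :: v :: l1) by case/andP: hc2.
  have mem2 : forall w, w \in z :: v :: l1 -> w \in c.
    move=> w hw; apply: mem'; move: hw; rewrite !inE mem_rcons !inE.
    by case: (w == z); case: (w == v); case: (w \in l1).
  apply: (gen hc2 _ ezv) => [|w]; first by move: hs'; rewrite size_rcons /=.
  case: (eqVneq z w) => [<-|zw].
    move: u2; rewrite /= inE negb_or => /andP[/andP[zv zl] _].
    rewrite (eq_sym v z) (negbTE zv) (negbTE zl) /=.
    by apply: hpos; apply: mem2; rewrite inE eqxx.
  case: (eqVneq v w) => [<-|vw].
    by rewrite inE eqxx /= add0n.
  rewrite /= add0n.
  case wl: (w \in v :: l1) => //.
  by apply: hpos; apply: mem2; rewrite inE wl orbT.
have a1 : forall v, v \in c -> a v = 1.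
  move=> v vc; have := hpos v vc; have := hasPn noheavy v vc; rewrite -leqNgt; lia.
case: (boolP [exists x, exists y, [&& e x y, 0 < a x, 0 < a y & x \notin c]]).
  move=> /existsP [x /existsP [y /and4P [exy ax ay xc]]].
  case: (boolP (y \in c)) => yc.
    case: (rot_to yc) => i s' hr.
    have hc' : ucycle e (y :: s') by rewrite -hr rot_ucycle.
    have hs' : size s' = 2 * s by have := size_rot i c; rewrite hr /= Ls; lia.
    have mem' : forall w, w \in y :: s' -> w \in c by move=> w; rewrite -hr mem_rot.
    apply: (gen hc' hs' exy) => w.
    have ys : y \notin s' by case/andP: hc' => _ /andP[].
    have xs : x \notin s' by apply: contra xc => h; apply: mem'; rewrite inE h orbT.
    case: (eqVneq x w) => [<-|xw].
      have -> : (y == x) = false by apply/eqP => h; rewrite -h yc in xc.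
      by rewrite (negbTE xs).
    case: (eqVneq y w) => [<-|yw]; first by rewrite (negbTE ys).
    rewrite /=; case ws: (w \in s') => //.
    by apply: hpos; apply: mem'; rewrite inE ws orbT.
  move: hc hca Ls xc yc; case: c {hpos uc sc c3 Lge hlong noheavy a1 hco} => [|z l] hc hca Ls xc yc.
    by move: Ls; rewrite addn1.
  have hsl : size l = 2 * s by move: Ls => /= /eqP; rewrite addn1 eqSS => /eqP.
  apply: (gen hc hsl exy) => w.
  have xy : x != y by apply: contraTneq exy => ->; rewrite e_irr.
  have xl : x \notin l by apply: contra xc => h; rewrite inE h orbT.
  have yl : y \notin l by apply: contra yc => h; rewrite inE h orbT.
  case: (eqVneq x w) => [<-|xw]; first by rewrite eq_sym (negbTE xy) (negbTE xl).
  case: (eqVneq y w) => [<-|yw]; first by rewrite (negbTE yl).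
  rewrite /=; case wl: (w \in l) => //.
  by move/allP: hca => /(_ w); rewrite inE wl orbT => /(_ isT).
move=> noext; exfalso.
have [x0 _] : exists x0 : 'I_n, True by case: (c) c3 => [//|h _] _; exists h.
have oddE : forall k, odd k -> k = (2 * k./2).+1.
  by move=> k ok; rewrite -[k in k = _]odd_double_half ok mul2n.
have key := chord hodd sc uc Ls.
pose Z := [set v | a v == 0].
have Z0 : {in Z, forall i, a i = 0} by move=> i; rewrite inE => /eqP.
pose f := fun k : 'I_s.+1 => nth x0 c (2 * k).
pose Ev := f @: [set: 'I_s.+1].
have wEv : wa a Ev = s.+1.
  rewrite /wa big_imset /=.
    rewrite (eq_bigr (fun _ => 1)); last by move=> k _; rewrite /f a1 // mem_nth // Ls; have := ltn_ord k; lia.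
    by rewrite sum1_card cardsT card_ord.
  move=> k1 k2 _ _ /eqP; rewrite /f nth_uniq ?Ls //; try (have := ltn_ord k1; have := ltn_ord k2; lia).
  by move=> /eqP h; apply: ord_inj; lia.
have evIn : forall w, w \in c -> ~~ odd (index w c) -> w \in Ev.
  move=> w wc ev.
  have iw : index w c < size c by rewrite index_mem.
  have hk : (index w c)./2 < s.+1.
    have := odd_double_half (index w c); rewrite (negbTE ev) add0n -mul2n; lia.
  apply/imsetP; exists (Ordinal hk) => //.
  rewrite /f /=.
  have -> : 2 * (index w c)./2 = index w c.
    by have := odd_double_half (index w c); rewrite (negbTE ev) add0n -mul2n.
  by rewrite nth_index.
have hCov : vertex_cover e (Ev :|: Z).
  apply/coverP => i j eij; rewrite !inE.
  case ai: (a i == 0); first by rewrite !orbT.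
  case aj: (a j == 0); first by rewrite !orbT.
  have ic : i \in c.
    apply/negPn/negP => ic; move/negP: noext; apply; apply/existsP; exists i; apply/existsP; exists j.
    by rewrite eij ic !lt0n ai aj.
  have jc : j \in c.
    apply/negPn/negP => jc; move/negP: noext; apply; apply/existsP; exists j; apply/existsP; exists i.
    by rewrite e_sym eij jc !lt0n ai aj.
  case: (boolP (odd (index i c))) => oi; last by rewrite (evIn i ic oi).
  case: (boolP (odd (index j c))) => oj; last by rewrite (evIn j jc oj) !orbT.
  exfalso; case: (ltngtP (index i c) (index j c)) => h.
  - exact: key eij ic jc oi oj h.
  - by apply: (key j i) => //; rewrite e_sym.
  - have : i = j by rewrite -(nth_index x0 ic) h nth_index.
    by move=> ij; rewrite ij e_irr in eij.
have := hcov _ hCov; rewrite wa_U0 // wEv ltnn.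
by [].
Qed.

End Cyc.

Section Comb2.
Variable n : nat.
Variable e : rel 'I_n.
Hypothesis e_sym : symmetric e.
Hypothesis e_irr : irreflexive e.

Lemma comb s (a : 'I_n -> nat)
  (hodd : forall c : seq 'I_n, ucycle e c -> 3 <= size c -> odd (size c) -> ~~ (size c <= 2 * s - 3))
  (hcov : forall C, vertex_cover e C -> s < wa a C) :
  exists L : seq ('I_n * 'I_n), size L = s /\ all (fun p => e p.1 p.2) L /\ forall v, loadv L v <= a v.
Proof.
elim: s a hodd hcov => [|s IH] a hodd hcov.
  by exists [::]; split => //; split => // v; rewrite /loadv big_nil.
case: (classic (exists c, [/\ ucycle e c, all (fun x => 0 < a x) c & odd (size c)])).
  by case=> c [hc hca hco]; apply: (cycle_case e_sym e_irr hodd hcov hc hca hco).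
move=> nocyc.
have [col hcol] : exists col : 'I_n -> bool, forall x y, e x y -> 0 < a x -> 0 < a y -> col x != col y.
  apply: (dich e_sym (p := fun x => 0 < a x)) => c hc hca; apply/negP => hco.
  by apply: nocyc; exists c.
have exk : exists k, [exists C, vertex_cover e C && (wa a C == k)].
  exists (wa a setT); apply/existsP; exists setT; rewrite eqxx andbT.
  by apply/coverP => i j _; rewrite inE.
case: (ex_minnP exk) => t /existsP [Cm /andP[hCm /eqP hCmt]] tmin.
have hmin : forall C, vertex_cover e C -> t <= wa a C.
  by move=> C hC; apply: tmin; apply/existsP; exists C; rewrite hC eqxx.
have ht : s.+1 < t by rewrite -hCmt; apply: hcov.
have [u [v [euv au av huv]]] := BL e_sym e_irr hcol hmin hCm hCmt (leq_ltn_trans (leq0n _) ht).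
have uv : u != v by apply: contraTneq euv => ->; rewrite e_irr.
pose a' := fun i => a i - (i == u) - (i == v).
have hcov' : forall C, vertex_cover e C -> s < wa a' C.
  move=> C hC; have := wa_minus C au av uv; rewrite -/a'.
  have h1 := hmin C hC.
  case: (boolP (u \in C)) => uC; case: (boolP (v \in C)) => vC /=.
  - have := huv C hC uC vC; lia.
  - lia.
  - lia.
  - lia.
have hodd' : forall c : seq 'I_n, ucycle e c -> 3 <= size c -> odd (size c) -> ~~ (size c <= 2 * s - 3).
  move=> c h1 h2 h3; apply/negP => h4; have := hodd c h1 h2 h3; rewrite -ltnNge => h5.
  lia.
have [L [hL [hLe hLl]]] := IH a' hodd' hcov'.
exists ((u, v) :: L); split; first by rewrite /= hL.
split; first by rewrite /= euv hLe.
move=> x; rewrite /loadv big_cons /=; have := hLl x; rewrite /loadv /a'.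
have vu : v != u by rewrite eq_sym.
case: (eqVneq u x) => [<-|ux].
  rewrite ?eqxx (negbTE uv) (negbTE vu) /= ?subn0; lia.
case: (eqVneq v x) => [<-|vx].
  rewrite ?eqxx ?(negbTE uv) ?(negbTE vu) ?(negbTE ux) /= ?subn0. lia.
rewrite ?(negbTE ux) ?(negbTE vx) ?(eq_sym x u) ?(eq_sym x v) ?(negbTE ux) ?(negbTE vx) /= ?subn0; lia.
Qed.

End Comb2.

Lemma sum_subset n (A B : {set 'I_n}) (a : 'I_n -> nat) : A \subset B ->
  \sum_(i in A) a i <= \sum_(i in B) a i.
Proof.
move=> sAB; rewrite [X in _ <= X](bigID (fun i => i \in A)) /=.
apply: leq_trans (leq_addr _ _); rewrite leq_eqVlt; apply/orP; left; apply/eqP.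
apply: eq_bigl => i; case: (boolP (i \in A)) => hi; rewrite ?andbT ?andbF //.
by rewrite (subsetP sAB).
Qed.

Theorem proposition3p7 (K : fieldType) (n : nat) (e : rel 'I_n)
  (e_sym : symmetric e) (e_irr : irreflexive e) (s : nat) (hs : 1 <= s)
  (no_short_odd_cycle : forall c : seq 'I_n,
      ucycle e c -> 3 <= size c -> odd (size c) -> ~~ (size c <= 2 * s - 3)) :
  forall f : mpoly K n,
    symbolic_power e s.+1 f -> ideal_pow (edge_ideal K e) s f.
Proof.
move=> f hf.
have H : allmon (fun m => forall C : {set 'I_n}, min_vertex_cover e C -> s.+1 <= wt C m) f.
  apply: allmon_and => C.
  case: (boolP (min_vertex_cover e C)) => hC.
    by apply: allmonW (allmon_pow (hf C hC)) => m h _.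
  by apply: allmonW (allmonT f) => m _.
apply: (allmon_expand (pow_ideal _ _)) H.
move=> m hm.
have hcov : forall C, vertex_cover e C -> s < \sum_(i in C) m (nat_of_ord i).
  move=> C hC; case: (minset_exists hC) => C' hC' sub.
  exact: leq_trans (hm C' hC') (sum_subset _ sub).
have [L [hL [hLe hLl]]] := comb e_sym e_irr no_short_odd_cycle hcov.
rewrite -hL; apply: mono_pow => // i hi.
have := hLl (Ordinal hi); congr (_ <= _).
Qed.
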